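(* If expressions $e_1$ and $e_2$ are compatible and $[\![C_1]\!]$ and $[\![C_2]\!]$ are total functions, then $[\![(\mathsf{assume}\ e_1;C_1)+(\mathsf{assume}\ e_2;C_2)]\!]$ is a total function.
   Context: $\mathcal A=\langle U,+,\cdot,\mathbf 0,\mathbf 1\rangle$ is a partial semiring ($+$ commutative, associative, possibly partial, unit $\mathbf 0$; $\cdot$ total, associative, unit $\mathbf 1$; two-sided distributivity; $\mathbf 0$ annihilates), naturally ordered ($u\le v$ iff $\exists w.\,u+w=v$ is a partial order), Scott continuous, with a top element. Infinite sums are suprema of finite partial sums. $\mathcal W(\Sigma)$: maps $m:\Sigma\to U$ with countable support and defined mass, with pointwise operations. $\eta(\sigma)(\tau)=\mathbf 1$ if $\sigma=\tau$ else $\mathbf 0$; $f^\dagger(m)(\tau)=\sum_{\sigma\in\mathrm{supp}(m)}m(\sigma)\cdot f(\sigma)(\tau)$. Program semantics $[\![C]\!]:\Sigma\to\mathcal W(\Sigma)$ (possibly partial): $[\![C_1;C_2]\!](\sigma)=[\![C_2]\!]^\dagger([\![C_1]\!](\sigma))$, $[\![C_1+C_2]\!](\sigma)=[\![C_1]\!](\sigma)+[\![C_2]\!](\sigma)$, $[\![\mathsf{assume}\ e]\!](\sigma)=[\![e]\!](\sigma)\cdot\eta(\sigma)$. An expression $e$ is a test $b$ (Boolean combination of $\mathsf{true},\mathsf{false}$ and primitive tests $t\subseteq\Sigma$, with $[\![b]\!](\sigma)\in\{\mathbf 0,\mathbf 1\}$, $[\![t]\!](\sigma)=\mathbf 1$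 iff $\sigma\in t$) or a weight $u\in U$ with $[\![u]\!](\sigma)=u$. Expressions $e_1,e_2$ are compatible if $[\![e_1]\!](\sigma)+[\![e_2]\!](\sigma)$ is defined for every $\sigma\in\Sigma$. *)

(* Defs.v *)
From Stdlib Require Import List Classical ClassicalEpsilon.
Import ListNotations.
Set Implicit Arguments.

Definition is_ub {U : Type} (le : U -> U -> Prop) (D : U -> Prop) (u : U) :=
  forall d, D d -> le d u.
Definition is_lub {U : Type} (le : U -> U -> Prop) (D : U -> Prop) (u : U) :=
  is_ub le D u /\ forall w, is_ub le D w -> le u w.
Definition directed {U : Type} (le : U -> U -> Prop) (D : U -> Prop) :=
  (exists d, D d) /\
  forall a b, D a -> D b -> exists c, D c /\ le a c /\ le b c.

Record PSR := {
  U :> Type;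
  add : U -> U -> option U;
  mul : U -> U -> U;
  zero : U;
  one : U;
  add_comm : forall a b, add a b = add b a;
  (* associativity of the partial +, as Kleene equality *)
  add_assoc : forall a b c,
      match add a b with Some ab => add ab c | None => None end =
      match add b c with Some bc => add a bc | None => None end;
  add_zero : forall a, add a zero = Some a;
  mul_assoc : forall a b c, mul a (mul b c) = mul (mul a b) c;
  mul_one_l : forall a, mul one a = a;
  mul_one_r : forall a, mul a one = a;
  mul_add_l : forall u v w s, add v w = Some s -> add (mul u v) (mul u w) = Some (mul u s);
  mul_add_r : forall u v w s, add v w = Some s -> add (mul v u) (mul w u) = Some (mul s u);
  mul_zero_l : forall a, mul zero a = zero;
  mul_zero_r : forall a, mul a zero = zero;
  (* natural order u <= v iff exists w, u + w = v; it is a partial order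
     (reflexivity and transitivity hold automatically; antisymmetry is assumed) *)
  nat_antisym : forall a b,
      (exists w, add a w = Some b) -> (exists w, add b w = Some a) -> a = b;
  dcpo : forall D, directed (fun a b => exists w, add a w = Some b) D ->
      exists s, is_lub (fun a b => exists w, add a w = Some b) D s;
  mul_cont_l : forall D s u, directed (fun a b => exists w, add a w = Some b) D ->
      is_lub (fun a b => exists w, add a w = Some b) D s ->
      is_lub (fun a b => exists w, add a w = Some b) (fun v => exists d, D d /\ v = mul u d) (mul u s);
  mul_cont_r : forall D s u, directed (fun a b => exists w, add a w = Some b) D ->
      is_lub (fun a b => exists w, add a w = Some b) D s ->
      is_lub (fun a b => exists w, add a w = Some b) (fun v => exists d, D d /\ v = mul d u) (mul s u);
  add_cont : forall D s u, directed (fun a b => exists w, add a w = Some b) D ->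
      is_lub (fun a b => exists w, add a w = Some b) D s ->
      (forall d, D d -> add u d <> None) ->
      exists t, add u s = Some t /\
        is_lub (fun a b => exists w, add a w = Some b) (fun v => exists d, D d /\ add u d = Some v) t;
  has_top : exists t, forall u, exists w, add u w = Some t
}.

Section Sem.
Variable A : PSR.
Variable Sigma : Type.

Definition le (a b : A) : Prop := exists w, add A a w = Some b.

Definition fin_sum (l : list A) : option A :=
  fold_right (fun a acc => match acc with Some s => add A a s | None => None end)
             (Some (zero A)) l.

Definition partial_sum {I : Type} (S : I -> Prop) (g : I -> A) (v : A) : Prop :=
  exists l : list I, NoDup l /\ (forall x, In x l -> S x) /\ fin_sum (map g l) = Some v.

Definition is_sum {I : Type} (S : I -> Prop) (g : I -> A) (u : A) : Prop :=
  (forall l : list I, NoDup l -> (forall x, In x l -> S x) -> fin_sum (map g l) <> None) /\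
  is_lub le (partial_sum S g) u.

Definition countable {I : Type} (S : I -> Prop) : Prop :=
  exists f : I -> nat, forall x y, S x -> S y -> f x = f y -> x = y.

Definition supp (m : Sigma -> A) (s : Sigma) : Prop := m s <> zero A.

(* m belongs to W(Sigma): countable support and defined mass *)
Definition is_weighting (m : Sigma -> A) : Prop :=
  countable (supp m) /\ exists u, is_sum (supp m) m u.

Definition guard {X : Type} (P : Prop) (x : X) : option X :=
  if excluded_middle_informative P then Some x else None.

Definition sum_val (S : Sigma -> Prop) (g : Sigma -> A) : option A :=
  match excluded_middle_informative (exists u, is_sum S g u) with
  | left H => Some (proj1_sig (constructive_indefinite_description _ H))
  | right _ => None
  end.

(* a (possibly partial) program denotation Sigma -> W(Sigma) *)
Definition den := Sigma -> option (Sigma -> A).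

Definition wf_den (d : den) : Prop :=
  forall s m, d s = Some m -> is_weighting m.

Definition total (d : den) : Prop := forall s, d s <> None.

Definition eta (s : Sigma) : Sigma -> A :=
  fun t => if excluded_middle_informative (s = t) then one A else zero A.

Definition wplus (m1 m2 : Sigma -> A) : option (Sigma -> A) :=
  let r := fun t => match add A (m1 t) (m2 t) with Some v => v | None => zero A end in
  guard ((forall t, add A (m1 t) (m2 t) <> None) /\ is_weighting r) r.

(* Kleisli extension f^dagger(m)(t) = sum_{s in supp m} m(s) . f(s)(t) *)
Definition bind (f : den) (m : Sigma -> A) : option (Sigma -> A) :=
  let g := fun s t => match f s with Some m' => m' t | None => zero A end in
  let r := fun t => match sum_val (supp m) (fun s => mul A (m s) (g s t)) with
                    | Some v => v | None => zero A end in
  guard ((forall s, supp m s -> f s <> None) /\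
         (forall t, exists u, is_sum (supp m) (fun s => mul A (m s) (g s t)) u) /\
         is_weighting r) r.

Inductive test : Type :=
  | TTrue | TFalse
  | TPrim (t : Sigma -> Prop)
  | TNot (b : test)
  | TAnd (b1 b2 : test)
  | TOr (b1 b2 : test).

Fixpoint holds (b : test) (s : Sigma) : Prop :=
  match b with
  | TTrue => True
  | TFalse => False
  | TPrim t => t s
  | TNot b => ~ holds b s
  | TAnd b1 b2 => holds b1 s /\ holds b2 s
  | TOr b1 b2 => holds b1 s \/ holds b2 s
  end.

Inductive expr : Type :=
  | ETest (b : test)
  | EWeight (u : A).

Definition eval (e : expr) (s : Sigma) : A :=
  match e with
  | ETest b => if excluded_middle_informative (holds b s) then one A else zero A
  | EWeight u => u
  end.

Definition compatible (e1 e2 : expr) : Prop :=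
  forall s, add A (eval e1 s) (eval e2 s) <> None.

Definition sem_assume (e : expr) : den :=
  fun s => let r := fun t => mul A (eval e s) (eta s t) in guard (is_weighting r) r.

Definition sem_seq (d1 d2 : den) : den :=
  fun s => match d1 s with Some m => bind d2 m | None => None end.

Definition sem_plus (d1 d2 : den) : den :=
  fun s => match d1 s, d2 s with Some m1, Some m2 => wplus m1 m2 | _, _ => None end.

End Sem.

(* Main.v *)
Require Import Defs.
From Stdlib Require Import List Permutation Classical ClassicalEpsilon FunctionalExtensionality Lia.
Import ListNotations.

Section Alg.
Variable A : PSR.
Local Notation add := (add A).
Local Notation mul := (mul A).
Local Notation zero := (zero A).
Local Notation one := (one A).
Local Notation fs := (fin_sum A).
Local Notation lee := (le A).

Lemma zero_add a : add zero a = Some a.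
Proof. rewrite add_comm; apply add_zero. Qed.

Lemma le_refl a : lee a a.
Proof. exists zero; apply add_zero. Qed.

Lemma zero_le a : lee zero a.
Proof. exists a; apply zero_add. Qed.

Lemma le_trans a b c : lee a b -> lee b c -> lee a c.
Proof.
  intros [w Hw] [v Hv]. pose proof (add_assoc A a w v) as H.
  rewrite Hw, Hv in H. destruct (add w v) as [wv|] eqn:E; [|discriminate].
  exists wv; auto.
Qed.

Lemma le_antisym a b : lee a b -> lee b a -> a = b.
Proof. apply nat_antisym. Qed.

Lemma fs_cons x l : fs (x :: l) = match fs l with Some s => add x s | None => None end.
Proof. reflexivity. Qed.

Lemma fs_app l1 l2 : fs (l1 ++ l2) =
  match fs l1, fs l2 with Some a, Some b => add a b | _, _ => None end.
Proof.
  induction l1 as [|x l1 IH]; simpl.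
  - destruct (fs l2); [rewrite zero_add|]; reflexivity.
  - simpl app. change (fs (x :: (l1 ++ l2)) = match fs (x :: l1), fs l2 with Some a, Some b => add a b | _, _ => None end).
    rewrite !fs_cons, IH.
    destruct (fs l1) as [a|]; destruct (fs l2) as [b|]; auto.
    + pose proof (add_assoc A x a b) as H.
      destruct (add a b) as [ab|]; destruct (add x a) as [xa|]; simpl in *; auto.
    + destruct (add x a); auto.
Qed.

Lemma fs_perm l l' : Permutation l l' -> fs l = fs l'.
Proof.
  induction 1; auto.
  - rewrite !fs_cons, IHPermutation; auto.
  - rewrite !fs_cons. destruct (fs l) as [s|]; auto.
    pose proof (add_assoc A y x s) as H1. pose proof (add_assoc A x y s) as H2.
    rewrite (add_comm A y x) in H1. rewrite H1 in H2. auto.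
  - congruence.
Qed.

Lemma fs_two a b : fs [a; b] = add a b.
Proof. rewrite fs_cons; simpl. rewrite add_zero. reflexivity. Qed.

Lemma fs_one a : fs [a] = Some a.
Proof. simpl. apply add_zero. Qed.

Lemma fs_app_some l1 l2 c : fs (l1 ++ l2) = Some c ->
  exists a b, fs l1 = Some a /\ fs l2 = Some b /\ add a b = Some c.
Proof.
  rewrite fs_app. destruct (fs l1) as [a|]; destruct (fs l2) as [b|]; try discriminate.
  intros; eauto.
Qed.

Lemma add4 a b c d x y z : add a b = Some x -> add c d = Some y -> add x y = Some z ->
  exists u v, add a c = Some u /\ add b d = Some v /\ add u v = Some z.
Proof.
  intros H1 H2 H3.
  assert (E : fs ([a;b] ++ [c;d]) = Some z) by (rewrite fs_app, !fs_two, H1, H2; auto).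
  rewrite (fs_perm ([a;b] ++ [c;d]) ([a;c] ++ [b;d])) in E.
  2:{ simpl. apply perm_skip. apply perm_swap. }
  apply fs_app_some in E. destruct E as (u & v & Hu & Hv & Huv).
  rewrite fs_two in Hu, Hv. eauto.
Qed.

Lemma add_down x y x' y' c : lee x x' -> lee y y' -> add x' y' = Some c ->
  exists s, add x y = Some s /\ lee s c.
Proof.
  intros [w Hw] [v Hv] H.
  destruct (add4 _ _ _ _ _ _ _ Hw Hv H) as (u & u' & Hu & Hu' & Huu).
  exists u; split; auto. exists u'; auto.
Qed.

Lemma add_down' x y x' y' : lee x x' -> lee y y' -> add x' y' <> None -> add x y <> None.
Proof.
  intros H1 H2 H. destruct (add x' y') as [c|] eqn:E; [|congruence].
  destruct (add_down _ _ _ _ _ H1 H2 E) as (s & Hs & _). congruence.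
Qed.

Lemma mul_le_l c x y : lee x y -> lee (mul c x) (mul c y).
Proof. intros [w Hw]. exists (mul c w). apply mul_add_l; auto. Qed.

Lemma mul_le_r c x y : lee x y -> lee (mul x c) (mul y c).
Proof. intros [w Hw]. exists (mul w c). apply mul_add_r; auto. Qed.

Lemma fs_mul c l p : fs l = Some p -> fs (map (mul c) l) = Some (mul c p).
Proof.
  revert p; induction l as [|x l IH]; intros p H.
  - simpl in *. injection H as <-. rewrite mul_zero_r. auto.
  - rewrite fs_cons in H. simpl map. rewrite fs_cons.
    destruct (fs l) as [q|] eqn:E; [|discriminate].
    rewrite (IH q eq_refl). apply mul_add_l; auto.
Qed.

Lemma lub_unique (D : A -> Prop) u v : is_lub lee D u -> is_lub lee D v -> u = v.
Proof. intros [H1 H2] [H3 H4]. apply le_antisym; auto. Qed.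


Definition decb (P : Prop) : bool := if excluded_middle_informative P then true else false.

Lemma decb_true P : decb P = true <-> P.
Proof. unfold decb; destruct excluded_middle_informative; split; intros; auto; discriminate. Qed.

Lemma perm_incl {I : Type} (l' l : list I) : NoDup l' -> incl l' l -> NoDup l ->
  exists r, Permutation l (l' ++ r).
Proof.
  revert l; induction l' as [|x l' IH]; intros l Hn Hi Hl.
  - exists l; auto.
  - assert (Hx : In x l) by (apply Hi; left; auto).
    destruct (in_split _ _ Hx) as (l1 & l2 & ->).
    inversion Hn; subst.
    assert (Hn2 : NoDup (l1 ++ l2)) by (eapply NoDup_remove_1; eauto).
    destruct (IH (l1 ++ l2)) as [r Hr]; auto.
    + intros y Hy. assert (Hy' : In y (l1 ++ x :: l2)) by (apply Hi; right; auto).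
      apply in_app_or in Hy'. apply in_or_app. destruct Hy' as [H|[H|H]]; auto.
      subst; contradiction.
    + exists r. simpl. eapply perm_trans. apply Permutation_sym, Permutation_middle.
      apply perm_skip; auto.
Qed.

Lemma sub_le {I : Type} (g : I -> A) l' l v : NoDup l' -> incl l' l -> NoDup l ->
  fs (map g l) = Some v -> exists v', fs (map g l') = Some v' /\ lee v' v.
Proof.
  intros Hn Hi Hl H. destruct (perm_incl l' l Hn Hi Hl) as [r Hr].
  rewrite (fs_perm _ (map g (l' ++ r))) in H by (apply Permutation_map; auto).
  rewrite map_app in H. apply fs_app_some in H. destruct H as (a & b & Ha & Hb & Hab).
  exists a; split; auto. exists b; auto.
Qed.

Lemma union_list {I : Type} (l1 l2 : list I) : NoDup l1 -> NoDup l2 ->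
  exists l, NoDup l /\ incl l1 l /\ incl l2 l /\ forall x, In x l -> In x l1 \/ In x l2.
Proof.
  intros H1 H2. exists (l1 ++ filter (fun x => decb (~ In x l1)) l2).
  repeat split.
  - apply NoDup_app; [auto|apply NoDup_filter; auto|].
    intros a Ha Hb. apply filter_In in Hb. destruct Hb as [_ Hb]. rewrite decb_true in Hb. auto.
  - intros x Hx; apply in_or_app; auto.
  - intros x Hx. apply in_or_app. destruct (classic (In x l1)); auto.
    right. apply filter_In. split; auto. rewrite decb_true; auto.
  - intros x Hx. apply in_app_or in Hx. destruct Hx as [H|H]; auto.
    apply filter_In in H. tauto.
Qed.

Lemma zero_drop {I : Type} (g : I -> A) (P : I -> Prop) l :
  (forall x, ~ P x -> g x = zero) -> fs (map g l) = fs (map g (filter (fun x => decb (P x)) l)).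
Proof.
  intros Hz. induction l as [|x l IH]; auto.
  simpl. destruct (decb (P x)) eqn:E.
  - simpl map. rewrite !fs_cons, IH; auto.
  - assert (Hx : ~ P x) by (intro Hp; apply (proj2 (decb_true _)) in Hp; congruence).
    rewrite (Hz x Hx), <- IH. destruct (fs (map g l)); auto. apply zero_add.
Qed.

Lemma supp_zero {I : Type} (g : I -> A) x : ~ supp A g x -> g x = zero.
Proof. unfold supp. intros H. apply NNPP; auto. Qed.

Lemma filter_supp {I : Type} (g : I -> A) l :
  NoDup l -> NoDup (filter (fun x => decb (supp A g x)) l) /\
  (forall x, In x (filter (fun x => decb (supp A g x)) l) -> supp A g x).
Proof.
  intros H; split. apply NoDup_filter; auto.
  intros x Hx. apply filter_In in Hx. apply (proj1 (decb_true _)); tauto.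
Qed.

Lemma sum_any {I : Type} (g : I -> A) U l : is_sum A (supp A g) g U -> NoDup l ->
  exists p, fs (map g l) = Some p /\ lee p U.
Proof.
  intros [Hd [Hub _]] Hl. rewrite (zero_drop g (supp A g) l) by apply supp_zero.
  destruct (filter_supp g l Hl) as [H1 H2].
  specialize (Hd _ H1 H2). destruct (fs _) as [p|] eqn:E; [|congruence].
  exists p; split; auto. apply Hub. exists (filter (fun x => decb (supp A g x)) l); auto.
Qed.

Lemma ub_any {I : Type} (g : I -> A) w l p : is_ub lee (partial_sum A (supp A g) g) w ->
  NoDup l -> fs (map g l) = Some p -> lee p w.
Proof.
  intros Hub Hl E. rewrite (zero_drop g (supp A g) l) in E by apply supp_zero.
  destruct (filter_supp g l Hl) as [H1 H2].
  apply Hub. exists (filter (fun x => decb (supp A g x)) l); auto.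
Qed.

Lemma directed_ps {I : Type} (S : I -> Prop) g U : is_sum A S g U ->
  directed lee (partial_sum A S g).
Proof.
  intros [Hd _]. split.
  - exists zero. exists []; repeat split; auto. constructor. intros x [].
  - intros a b (l1 & Hn1 & Hs1 & E1) (l2 & Hn2 & Hs2 & E2).
    destruct (union_list l1 l2 Hn1 Hn2) as (l & Hn & Hi1 & Hi2 & Hu).
    assert (HS : forall x, In x l -> S x) by (intros x Hx; destruct (Hu x Hx); auto).
    specialize (Hd l Hn HS). destruct (fs (map g l)) as [c|] eqn:E; [|congruence].
    exists c. split. exists l; auto.
    destruct (sub_le g l1 l c Hn1 Hi1 Hn E) as (v1 & Ev1 & Hv1).
    destruct (sub_le g l2 l c Hn2 Hi2 Hn E) as (v2 & Ev2 & Hv2).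
    split; congruence.
Qed.

Lemma sum_single {I : Type} (S : I -> Prop) g s0 :
  (forall x, S x -> x = s0) -> (~ S s0 -> g s0 = zero) -> is_sum A S g (g s0).
Proof.
  intros Hs Hz.
  assert (Hl : forall l, NoDup l -> (forall x, In x l -> S x) -> l = [] \/ l = [s0] /\ S s0).
  { intros [|x [|y l]] Hn Hi; auto.
    - right. assert (Hx : S x) by (apply Hi; left; auto). pose proof (Hs x Hx); subst; auto.
    - exfalso. inversion Hn; subst. apply H1.
      rewrite (Hs x), (Hs y); [left; auto| |]; apply Hi; simpl; auto. }
  split; [|split].
  - intros l Hn Hi. destruct (Hl l Hn Hi) as [->|[-> _]]; simpl.
    congruence. rewrite add_zero; congruence.
  - intros d (l & Hn & Hi & E). destruct (Hl l Hn Hi) as [->|[-> _]]; simpl in E.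
    + injection E as <-. apply zero_le.
    + rewrite add_zero in E. injection E as <-. apply le_refl.
  - intros w Hw. destruct (classic (S s0)) as [H|H].
    + apply Hw. exists [s0]. repeat split. repeat constructor; auto. intros x [<-|[]]; auto.
      apply fs_one.
    + rewrite Hz; auto. apply zero_le.
Qed.

Lemma is_sum_unique {I : Type} (S : I -> Prop) g u v : is_sum A S g u -> is_sum A S g v -> u = v.
Proof. intros [_ H1] [_ H2]. eapply lub_unique; eauto. Qed.

Lemma sum_val_eq {Sigma : Type} (S : Sigma -> Prop) g u : is_sum A S g u -> sum_val A S g = Some u.
Proof.
  intros H. unfold sum_val. destruct excluded_middle_informative as [e|n].
  - f_equal. destruct (constructive_indefinite_description _ e) as [v Hv]; simpl.
    eapply is_sum_unique; eauto.
  - exfalso; eauto.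
Qed.

Lemma guard_true {X : Type} (P : Prop) (x : X) : P -> guard P x = Some x.
Proof. intros H; unfold guard; destruct excluded_middle_informative; tauto. Qed.


Lemma fs_mul_map {I : Type} (a : I -> A) c l p : fs (map a l) = Some p ->
  fs (map (fun t => mul c (a t)) l) = Some (mul c p).
Proof. intros H. rewrite <- map_map. apply fs_mul; auto. Qed.

Lemma scal_sum {I : Type} (a : I -> A) U c : is_sum A (supp A a) a U ->
  is_sum A (supp A (fun t => mul c (a t))) (fun t => mul c (a t)) (mul c U).
Proof.
  intros H. split; [|split].
  - intros l Hn Hi. destruct (sum_any a U l H Hn) as (p & Ep & _).
    rewrite (fs_mul_map a c l p Ep); congruence.
  - intros d (l & Hn & Hi & E). destruct (sum_any a U l H Hn) as (p & Ep & Hp).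
    rewrite (fs_mul_map a c l p Ep) in E. injection E as <-. apply mul_le_l; auto.
  - intros w Hw. pose proof (mul_cont_l A c (directed_ps _ _ _ H) (proj2 H)) as [_ L].
    apply L. intros v (d & (l & Hn & Hi & E) & ->).
    eapply (ub_any (fun t => mul c (a t))); eauto. apply fs_mul_map; auto.
Qed.

Lemma countable_sub {I : Type} (S S' : I -> Prop) : (forall x, S' x -> S x) ->
  countable S -> countable S'.
Proof. intros H [f Hf]. exists f. intros; apply Hf; auto. Qed.

Lemma countable_union {I : Type} (S S1 S2 : I -> Prop) : countable S1 -> countable S2 ->
  (forall x, S x -> S1 x \/ S2 x) -> countable S.
Proof.
  intros [f1 H1] [f2 H2] H.
  exists (fun x => if decb (S1 x) then 2 * f1 x else 2 * f2 x + 1).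
  intros x y Hx Hy E.
  destruct (decb (S1 x)) eqn:Ex; destruct (decb (S1 y)) eqn:Ey; try lia.
  - apply H1; [apply (proj1 (decb_true _)); auto|apply (proj1 (decb_true _)); auto|lia].
  - apply H2; [| |lia].
    + destruct (H x Hx) as [h|h]; auto. apply (proj2 (decb_true _)) in h; congruence.
    + destruct (H y Hy) as [h|h]; auto. apply (proj2 (decb_true _)) in h; congruence.
Qed.

Section Plus.
Variable I : Type.
Variables m1 m2 : I -> A.
Let r := fun t => match add (m1 t) (m2 t) with Some v => v | None => zero end.

Lemma split_sum l : forall p1 p2 p, fs (map m1 l) = Some p1 -> fs (map m2 l) = Some p2 ->
  add p1 p2 = Some p -> fs (map r l) = Some p.
Proof.
  induction l as [|x l IH]; intros p1 p2 p E1 E2 E.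
  - simpl in *. injection E1 as <-. injection E2 as <-. rewrite zero_add in E. auto.
  - simpl map in *. rewrite fs_cons in *.
    destruct (fs (map m1 l)) as [q1|] eqn:F1; [|discriminate].
    destruct (fs (map m2 l)) as [q2|] eqn:F2; [|discriminate].
    destruct (add4 _ _ _ _ _ _ _ E1 E2 E) as (u & v & Hu & Hv & Huv).
    rewrite (IH q1 q2 v eq_refl eq_refl Hv). unfold r at 1. rewrite Hu. auto.
Qed.

Lemma plus_sum U1 U2 U : is_sum A (supp A m1) m1 U1 -> is_sum A (supp A m2) m2 U2 ->
  add U1 U2 = Some U -> is_sum A (supp A r) r U.
Proof.
  intros H1 H2 HU.
  assert (Key : forall l, NoDup l -> exists q1 q2 p, fs (map m1 l) = Some q1 /\
     fs (map m2 l) = Some q2 /\ add q1 q2 = Some p /\ fs (map r l) = Some p /\ lee p U).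
  { intros l Hn. destruct (sum_any m1 U1 l H1 Hn) as (q1 & E1 & L1).
    destruct (sum_any m2 U2 l H2 Hn) as (q2 & E2 & L2).
    destruct (add_down _ _ _ _ _ L1 L2 HU) as (p & Hp & Lp).
    exists q1, q2, p. repeat split; auto. eapply split_sum; eauto. }
  split; [|split].
  - intros l Hn _. destruct (Key l Hn) as (q1 & q2 & p & _ & _ & _ & E & _). congruence.
  - intros d (l & Hn & _ & E). destruct (Key l Hn) as (q1 & q2 & p & _ & _ & _ & E' & L).
    congruence.
  - intros w Hw.
    assert (Claim : forall l1 l2 d1 d2 v, NoDup l1 -> NoDup l2 -> fs (map m1 l1) = Some d1 ->
       fs (map m2 l2) = Some d2 -> add d2 d1 = Some v -> lee v w).
    { intros l1 l2 d1 d2 v Hn1 Hn2 E1 E2 Ev.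
      destruct (union_list l1 l2 Hn1 Hn2) as (l & Hn & Hi1 & Hi2 & _).
      destruct (Key l Hn) as (q1 & q2 & p & F1 & F2 & Fp & Fr & _).
      destruct (sub_le m1 l1 l q1 Hn1 Hi1 Hn F1) as (v1 & G1 & L1).
      destruct (sub_le m2 l2 l q2 Hn2 Hi2 Hn F2) as (v2 & G2 & L2).
      rewrite E1 in G1; injection G1 as <-. rewrite E2 in G2; injection G2 as <-.
      rewrite add_comm in Fp.
      destruct (add_down _ _ _ _ _ L2 L1 Fp) as (s & Hs & Ls).
      rewrite Ev in Hs; injection Hs as <-.
      eapply le_trans; eauto. eapply ub_any; eauto. }
    assert (Hd2 : forall d, partial_sum A (supp A m2) m2 d -> add U1 d <> None).
    { intros d (l & Hn & _ & E). destruct (sum_any m2 U2 l H2 Hn) as (q & Eq & Lq).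
      rewrite E in Eq; injection Eq as <-.
      apply (add_down' U1 d U1 U2); auto using le_refl. congruence. }
    destruct (add_cont A U1 (directed_ps _ _ _ H2) (proj2 H2) Hd2) as (t & Ht & _ & L).
    rewrite HU in Ht; injection Ht as <-.
    apply L. intros v (d2 & (l2 & Hn2 & _ & E2) & Ev).
    assert (Hd1 : forall d, partial_sum A (supp A m1) m1 d -> add d2 d <> None).
    { intros d (l & Hn & _ & E). destruct (sum_any m1 U1 l H1 Hn) as (q & Eq & Lq).
      rewrite E in Eq; injection Eq as <-.
      destruct (sum_any m2 U2 l2 H2 Hn2) as (q2 & Eq2 & Lq2).
      rewrite E2 in Eq2; injection Eq2 as <-.
      apply (add_down' d2 d U2 U1); auto. rewrite add_comm; congruence. }
    destruct (add_cont A d2 (directed_ps _ _ _ H1) (proj2 H1) Hd1) as (t & Ht & _ & L').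
    rewrite add_comm, Ev in Ht; injection Ht as <-.
    apply L'. intros v' (d1 & (l1 & Hn1 & _ & E1) & Ev').
    exact (Claim l1 l2 d1 d2 v' Hn1 Hn2 E1 E2 Ev').
Qed.

Lemma plus_countable : countable (supp A m1) -> countable (supp A m2) -> countable (supp A r).
Proof.
  intros C1 C2. apply (countable_union _ _ _ C1 C2).
  intros x Hx. destruct (classic (supp A m1 x)) as [h|h]; auto.
  destruct (classic (supp A m2 x)) as [h'|h']; auto.
  exfalso. apply Hx. unfold r. rewrite (supp_zero _ _ h), (supp_zero _ _ h'), add_zero. auto.
Qed.
End Plus.

End Alg.

Lemma scal_weighting (A : PSR) (Sigma : Type) (a : Sigma -> A) c :
  is_weighting A a -> is_weighting A (fun t => mul A c (a t)).
Proof.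
  intros [Cn [U HU]]. split.
  - eapply countable_sub; [|exact Cn]. intros x Hx Hz. apply Hx. rewrite Hz. apply mul_zero_r.
  - exists (mul A c U). apply scal_sum; auto.
Qed.

Lemma assume_bind (A : PSR) (Sigma : Type) (e : expr A Sigma) (C : den A Sigma) s a :
  wf_den C -> total C -> C s = Some a ->
  sem_seq (sem_assume e) C s = Some (fun t => mul A (eval e s) (a t)).
Proof.
  intros WC TC Ea. unfold sem_seq, sem_assume. cbv zeta.
  set (m := fun t => mul A (eval e s) (eta A s t)).
  assert (Ms : m s = eval e s).
  { unfold m, eta. destruct excluded_middle_informative; [|congruence]. apply mul_one_r. }
  assert (Msupp : forall x, supp A m x -> x = s).
  { intros x Hx. destruct (classic (x = s)) as [h|h]; auto. exfalso. apply Hx.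
    unfold m, eta. destruct excluded_middle_informative; [congruence|]. apply mul_zero_r. }
  rewrite guard_true.
  2:{ split. exists (fun _ => 0). intros x y Hx Hy _. rewrite (Msupp x), (Msupp y); auto.
      exists (m s). apply sum_single; auto. intros h. apply supp_zero; auto. }
  assert (HS : forall t, is_sum A (supp A m)
     (fun s' => mul A (m s') (match C s' with Some m' => m' t | None => zero A end))
     (mul A (eval e s) (a t))).
  { intros t.
    replace (mul A (eval e s) (a t)) with
      ((fun s' => mul A (m s') (match C s' with Some m' => m' t | None => zero A end)) s)
      by (simpl; rewrite Ea, Ms; auto).
    apply (sum_single A (supp A m) (fun s' => mul A (m s') (match C s' with Some m' => m' t | None => zero A end)) s); auto.
    intros h. simpl. rewrite (supp_zero _ _ _ h). apply mul_zero_l. }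
  unfold bind. cbv zeta.
  match goal with |- guard _ ?r = _ =>
    assert (Hr : r = fun t => mul A (eval e s) (a t)) end.
  { apply functional_extensionality. intros t. rewrite (sum_val_eq _ _ _ _ (HS t)). auto. }
  rewrite Hr. apply guard_true. split; [|split].
  - intros x _. apply TC.
  - intros t. eexists; apply HS.
  - apply scal_weighting. eapply WC; eauto.
Qed.

Theorem lemmaA8 (A : PSR) (Sigma : Type) (e1 e2 : expr A Sigma)
  (C1 C2 : den A Sigma) :
  wf_den C1 -> wf_den C2 ->
  compatible e1 e2 ->
  total C1 -> total C2 ->
  total (sem_plus (sem_seq (sem_assume e1) C1) (sem_seq (sem_assume e2) C2)).
Proof.
  intros W1 W2 Hc T1 T2 s.
  destruct (C1 s) as [a|] eqn:Ea; [|exfalso; apply (T1 s); auto].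
  destruct (C2 s) as [b|] eqn:Eb; [|exfalso; apply (T2 s); auto].
  unfold sem_plus. rewrite (assume_bind A Sigma e1 C1 s a W1 T1 Ea).
  rewrite (assume_bind A Sigma e2 C2 s b W2 T2 Eb).
  set (c1 := eval e1 s). set (c2 := eval e2 s).
  destruct (has_top A) as [Tp HT].
  specialize (Hc s). fold c1 c2 in Hc.
  destruct (add A c1 c2) as [c|] eqn:Ec; [|congruence].
  assert (Hdef : forall x y, exists z, add A (mul A c1 x) (mul A c2 y) = Some z).
  { intros x y.
    destruct (add_down A (mul A c1 x) (mul A c2 y) (mul A c1 Tp) (mul A c2 Tp) (mul A c Tp))
      as (z & Hz & _).
    - apply mul_le_l, HT.
    - apply mul_le_l, HT.
    - apply mul_add_r; auto.
    - eauto. }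
  destruct (W1 s a Ea) as [Cn1 [U1 HU1]].
  destruct (W2 s b Eb) as [Cn2 [U2 HU2]].
  destruct (Hdef U1 U2) as [U HU].
  unfold wplus. cbv zeta. rewrite guard_true; [congruence|].
  split.
  - intros t. destruct (Hdef (a t) (b t)) as [z Hz]. congruence.
  - split.
    + apply plus_countable.
      * eapply countable_sub; [|exact Cn1]. intros x Hx Hz. apply Hx. rewrite Hz. apply mul_zero_r.
      * eapply countable_sub; [|exact Cn2]. intros x Hx Hz. apply Hx. rewrite Hz. apply mul_zero_r.
    + exists U. eapply plus_sum; [apply scal_sum; exact HU1|apply scal_sum; exact HU2|exact HU].
Qed.
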